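(* Let $A$ and $B$ be automata. (1) If $B$ is deterministic and $A\le_B B$, then $A\le_R B$. (2) If all states of $A$ are reachable, $B$ has finite invisible nondeterminism, and $A\le_B B$, then $A\le_{iB}B$.
   Context: An automaton $A$ consists of a set $\mathrm{states}(A)$ of states, a nonempty set $\mathrm{start}(A)\subseteq\mathrm{states}(A)$ of start states, a set $\mathrm{acts}(A)$ of actions containing a distinguished internal action $\tau$, and a set $\mathrm{steps}(A)\subseteq\mathrm{states}(A)\times\mathrm{acts}(A)\times\mathrm{states}(A)$ of steps; write $s\xrightarrow{a}_A t$ for $(s,a,t)\in\mathrm{steps}(A)$. An execution fragment of $A$ is a finite or infinite alternating sequence $s_0a_1s_1a_2s_2\cdots$ of states and actions, beginning with a state and, if finite, ending with a state, such that $s_{i-1}\xrightarrow{a_i}_A s_i$ for all $i>0$. An execution is an execution fragment whose first state is a start state. A state is reachable if it is the last state of some finite execution. For states $s,t$ and a finite sequence $\beta$ of non-$\tau$ actions, write $s\stackrel{\beta}{\Rightarrow}_A t$ if $A$ has a finite execution fragment starting in $s$, with trace (subsequence of non-$\tau$ actions) $\beta$, ending in $t$. $A$ is deterministic if $|\mathrm{start}(A)|=1$ and for every state $s$ and finite sequence $\beta$ of non-$\tau$ actions there is at most one $t$ with $s\stackrel{\beta}{\Rightarrow}_A t$. $A$ has finite invisible nondeterminism if $\mathrm{start}(A)$ is finite and for every state $s$ and finite sequence $\beta$ of non-$\tau$ actions there are only finitely many $t$ with $s\stackrel{\beta}{\Rightarrow}_A t$. For a relation $R$ write $R[s]=\{u\mid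 (s,u)\in R\}$; $R$ is image-finite if every $R[s]$ is finite. A step refinement from $A$ to $B$ is a partial function $r:\mathrm{states}(A)\rightharpoonup\mathrm{states}(B)$ such that (1) if $s\in\mathrm{start}(A)$ then $s\in\mathrm{dom}(r)$ and $r(s)\in\mathrm{start}(B)$; (2) if $s\xrightarrow{a}_A t$ and $s\in\mathrm{dom}(r)$ then $t\in\mathrm{dom}(r)$ and either $r(s)=r(t)$ and $a=\tau$, or $r(s)\xrightarrow{a}_B r(t)$. Write $A\le_R B$ if one exists. A normed backward simulation from $A$ to $B$ is a pair $(b,n)$ where $b\subseteq\mathrm{states}(A)\times\mathrm{states}(B)$ is total (every $s\in\mathrm{states}(A)$ has $b[s]\neq\emptyset$) and $n:(\mathrm{steps}(A)\cup\mathrm{start}(A))\times\mathrm{states}(B)\to S$ for some set $S$ with a well-founded strict order $<$, such that: (1) if $s\in\mathrm{start}(A)$ and $u\in b[s]$ then (a) $u\in\mathrm{start}(B)$, or (b) there is $v\in b[s]$ with $v\xrightarrow{\tau}_B u$ and $n(s,v)<n(s,u)$; (2) if $t\xrightarrow{a}_A s$ and $u\in b[s]$ then (a) $u\in b[t]$ and $a=\tau$, or (b) there is $v\in b[t]$ with $v\xrightarrow{a}_B u$, or (c) there is $v\in b[s]$ with $v\xrightarrow{\tau}_B u$ and $n(t\xrightarrow{a}s,v)<n(t\xrightarrow{a}s,u)$. Write $A\le_B B$ if one exists and $A\le_{iB}B$ if one exists with $b$ image-finite. *)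

(* Defs.v *)
From Stdlib Require Import List.
Import ListNotations.


Record automaton (Act : Type) (tau : Act) := Automaton {
  state : Type;
  start : state -> Prop;
  acts  : Act -> Prop;
  step  : state -> Act -> state -> Prop;
  start_nonempty : exists s, start s;
  tau_in_acts : acts tau;
  step_acts : forall s a t, step s a t -> acts a
}.

Arguments state {Act tau} _.
Arguments start {Act tau} _ _.
Arguments acts {Act tau} _ _.
Arguments step {Act tau} _ _ _ _.

Section Defs.
Variables (Act : Type) (tau : Act).

Definition finite_pred (T : Type) (P : T -> Prop) : Prop :=
  exists l : list T, forall x, P x -> In x l.

(* A finite execution fragment s0 a1 s1 ... an sn is represented by its first
   state s0 and the list [(a1,s1); ...; (an,sn)]. *)
Fixpoint is_frag (A : automaton Act tau) (s0 : state A)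
    (l : list (Act * state A)) : Prop :=
  match l with
  | [] => True
  | (a, s1) :: l' => step A s0 a s1 /\ is_frag A s1 l'
  end.

Definition frag_last (A : automaton Act tau) (s0 : state A)
    (l : list (Act * state A)) : state A :=
  last (map snd l) s0.

Inductive trace_of {S : Type} : list (Act * S) -> list Act -> Prop :=
  | trace_nil : trace_of [] []
  | trace_tau : forall s l beta, trace_of l beta -> trace_of ((tau, s) :: l) beta
  | trace_vis : forall a s l beta, a <> tau ->
      trace_of l beta -> trace_of ((a, s) :: l) (a :: beta).

Definition weak (A : automaton Act tau) (s : state A) (beta : list Act)
    (t : state A) : Prop :=
  exists l, is_frag A s l /\ trace_of l beta /\ frag_last A s l = t.

Definition non_tau_seq (beta : list Act) : Prop := Forall (fun a => a <> tau) beta.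

Definition reachable (A : automaton Act tau) (s : state A) : Prop :=
  exists s0 l, start A s0 /\ is_frag A s0 l /\ frag_last A s0 l = s.

Definition deterministic (A : automaton Act tau) : Prop :=
  (exists s0, forall s, start A s <-> s = s0) /\
  forall s beta t1 t2, non_tau_seq beta ->
    weak A s beta t1 -> weak A s beta t2 -> t1 = t2.

Definition fin_invisible_nondet (A : automaton Act tau) : Prop :=
  finite_pred _ (start A) /\
  forall s beta, non_tau_seq beta -> finite_pred _ (fun t => weak A s beta t).

Definition step_refinement (A B : automaton Act tau)
    (r : state A -> option (state B)) : Prop :=
  (forall s, start A s -> exists u, r s = Some u /\ start B u) /\
  (forall s a t, step A s a t -> forall u, r s = Some u ->
     exists v, r t = Some v /\ ((u = v /\ a = tau) \/ step B u a v)).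

Definition le_R (A B : automaton Act tau) : Prop :=
  exists r, step_refinement A B r.

(* the domain steps(A) ∪ start(A) of the norm function *)
Inductive norm_dom (A : automaton Act tau) : Type :=
  | NStart : state A -> norm_dom A
  | NStep : state A -> Act -> state A -> norm_dom A.

Definition well_founded_strict_order (S : Type) (lt : S -> S -> Prop) : Prop :=
  well_founded lt /\ (forall x, ~ lt x x) /\
  (forall x y z, lt x y -> lt y z -> lt x z).

Definition normed_backward_sim (A B : automaton Act tau)
    (b : state A -> state B -> Prop)
    (S : Type) (lt : S -> S -> Prop) (n : norm_dom A -> state B -> S) : Prop :=
  well_founded_strict_order S lt /\
  (forall s, exists u, b s u) /\
  (forall s u, start A s -> b s u ->
     start B u \/
     (exists v, b s v /\ step B v tau u /\ lt (n (NStart A s) v) (n (NStart A s) u))) /\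
  (forall t a s u, step A t a s -> b s u ->
     (b t u /\ a = tau) \/
     (exists v, b t v /\ step B v a u) \/
     (exists v, b s v /\ step B v tau u /\
        lt (n (NStep A t a s) v) (n (NStep A t a s) u))).

Definition le_B (A B : automaton Act tau) : Prop :=
  exists b (S : Type) lt n, normed_backward_sim A B b S lt n.

Definition image_finite (A B : automaton Act tau)
    (b : state A -> state B -> Prop) : Prop :=
  forall s, finite_pred _ (b s).

Definition le_iB (A B : automaton Act tau) : Prop :=
  exists b (S : Type) lt n, normed_backward_sim A B b S lt n /\ image_finite A B b.

End Defs.

(* Main.v *)
Require Import Defs.
From Stdlib Require Import List Wellfounded ClassicalEpsilon Classical.
Import ListNotations.

Section Aux.
Variables (Act : Type) (tau : Act).

Lemma last_cons_gen (T : Type) (x : T) (l : list T) (d : T) :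
  last (x :: l) d = last l x.
Proof.
  revert x d; induction l as [|y l IH]; intros x d; auto.
  change (last (y :: l) d = last (y :: l) x). rewrite !IH; auto.
Qed.

Lemma is_frag_app (X : automaton Act tau) l1 l2 s :
  is_frag Act tau X s l1 -> is_frag Act tau X (frag_last Act tau X s l1) l2 ->
  is_frag Act tau X s (l1 ++ l2).
Proof.
  revert s; induction l1 as [|[a s1] l1 IH]; intros s H1 H2; simpl in *; auto.
  destruct H1 as [Hs H1]; split; auto.
  apply IH; auto. unfold frag_last in *.
  change (last (s1 :: map snd l1) s) with (last (s1 :: map snd l1) s) in H2.
  simpl map in H2. rewrite last_cons_gen in H2. exact H2.
Qed.

Lemma trace_app {S : Type} (l1 l2 : list (Act * S)) b1 b2 :
  trace_of Act tau l1 b1 -> trace_of Act tau l2 b2 ->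
  trace_of Act tau (l1 ++ l2) (b1 ++ b2).
Proof.
  intros H1 H2; induction H1; simpl; auto; constructor; auto.
Qed.

Lemma weak_refl (X : automaton Act tau) u : weak Act tau X u [] u.
Proof. exists []; simpl; repeat split; constructor. Qed.

Lemma weak_snoc_gen (X : automaton Act tau) u beta v a w b2 :
  weak Act tau X u beta v -> step X v a w -> trace_of Act tau [(a, w)] b2 ->
  weak Act tau X u (beta ++ b2) w.
Proof.
  intros [l [Hf [Ht Hl]]] Hs Htr.
  exists (l ++ [(a, w)]); repeat split.
  - apply is_frag_app; auto. rewrite Hl; simpl; auto.
  - apply trace_app; auto.
  - unfold frag_last. rewrite map_app. simpl. apply last_last.
Qed.

Lemma weak_tau (X : automaton Act tau) u beta v w :
  weak Act tau X u beta v -> step X v tau w -> weak Act tau X u beta w.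
Proof.
  intros H Hs. rewrite <- (app_nil_r beta). eapply weak_snoc_gen; eauto.
  repeat constructor.
Qed.

Lemma weak_vis (X : automaton Act tau) u beta v a w :
  weak Act tau X u beta v -> step X v a w -> a <> tau ->
  weak Act tau X u (beta ++ [a]) w.
Proof.
  intros H Hs Ha. eapply weak_snoc_gen; eauto. repeat constructor; auto.
Qed.

Inductive Reach (A : automaton Act tau) : state A -> list Act -> Prop :=
| R0 : forall s, start A s -> Reach A s []
| Rt : forall t s beta, Reach A t beta -> step A t tau s -> Reach A s beta
| Rv : forall t a s beta, Reach A t beta -> step A t a s -> a <> tau ->
    Reach A s (beta ++ [a]).

Lemma Reach_nontau A s beta : Reach A s beta -> non_tau_seq Act tau beta.
Proof.
  induction 1; unfold non_tau_seq in *; auto.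
  apply Forall_app; split; auto.
Qed.

Lemma Reach_step A t a s beta : Reach A t beta -> step A t a s ->
  exists beta', Reach A s beta'.
Proof.
  intros H Hs. destruct (classic (a = tau)) as [->|Ha].
  - exists beta; eapply Rt; eauto.
  - exists (beta ++ [a]); eapply Rv; eauto.
Qed.

Lemma frag_Reach A l : forall t beta, Reach A t beta -> is_frag Act tau A t l ->
  exists beta', Reach A (frag_last Act tau A t l) beta'.
Proof.
  induction l as [|[a s1] l IH]; intros t beta H Hf; simpl in *.
  - exists beta; exact H.
  - destruct Hf as [Hs Hf].
    destruct (Reach_step _ _ _ _ _ H Hs) as [b' Hb'].
    unfold frag_last; simpl map. rewrite last_cons_gen. eapply IH; eauto.
Qed.

Lemma reachable_Reach A s : reachable Act tau A s -> exists beta, Reach A s beta.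
Proof.
  intros [s0 [l [H0 [Hf Hl]]]]. subst. eapply frag_Reach; eauto. apply R0; auto.
Qed.

Lemma wf_meas (X : Type) (S : Type) (lt : S -> S -> Prop) (f : X -> S)
  (P : X -> Prop) : well_founded lt ->
  (forall u, (forall v, lt (f v) (f u) -> P v) -> P u) -> forall u, P u.
Proof.
  intros wf IH u.
  remember (f u) as x eqn:Ex. revert u Ex.
  induction x as [x IHx] using (well_founded_ind wf).
  intros u Ex. apply IH. intros v Hv. subst. eapply IHx; eauto.
Qed.

Lemma key A B b S lt n : normed_backward_sim Act tau A B b S lt n ->
  forall s beta, Reach A s beta -> forall u, b s u ->
  exists u0, start B u0 /\ weak Act tau B u0 beta u.
Proof.
  intros [[wf _] [_ [H1 H2]]] s beta Hr.
  induction Hr as [s Hs|t s beta Hr IH Hst|t a s beta Hr IH Hst Ha].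
  - apply (wf_meas _ _ lt (n (NStart Act tau A s))
      (fun u => b s u -> exists u0, start B u0 /\ weak Act tau B u0 [] u) wf).
    intros u IHu Hb. destruct (H1 s u Hs Hb) as [Hu|[v [Hv [Hvu Hlt]]]].
    + exists u; split; auto. apply weak_refl.
    + destruct (IHu v Hlt Hv) as [u0 [? ?]]. exists u0; split; auto.
      eapply weak_tau; eauto.
  - apply (wf_meas _ _ lt (n (NStep Act tau A t tau s))
      (fun u => b s u -> exists u0, start B u0 /\ weak Act tau B u0 beta u) wf).
    intros u IHu Hb. destruct (H2 t tau s u Hst Hb) as [[Hb' _]|[[v [Hv Hvu]]|[v [Hv [Hvu Hlt]]]]].
    + auto.
    + destruct (IH v Hv) as [u0 [? ?]]. exists u0; split; auto. eapply weak_tau; eauto.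
    + destruct (IHu v Hlt Hv) as [u0 [? ?]]. exists u0; split; auto.
      eapply weak_tau; eauto.
  - apply (wf_meas _ _ lt (n (NStep Act tau A t a s))
      (fun u => b s u -> exists u0, start B u0 /\ weak Act tau B u0 (beta ++ [a]) u) wf).
    intros u IHu Hb. destruct (H2 t a s u Hst Hb) as [[Hb' Hat]|[[v [Hv Hvu]]|[v [Hv [Hvu Hlt]]]]].
    + contradiction.
    + destruct (IH v Hv) as [u0 [? ?]]. exists u0; split; auto. eapply weak_vis; eauto.
    + destruct (IHu v Hlt Hv) as [u0 [? ?]]. exists u0; split; auto.
      eapply weak_tau; eauto.
Qed.

Lemma fin_union (B : automaton Act tau) beta :
  (forall s, finite_pred _ (fun t => weak Act tau B s beta t)) ->
  forall L0 : list (state B), exists l, forall u,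
    (exists u0, In u0 L0 /\ weak Act tau B u0 beta u) -> In u l.
Proof.
  intros Hf L0. induction L0 as [|x L IH].
  - exists []. intros u [u0 [[] _]].
  - destruct IH as [l Hl]. destruct (Hf x) as [lx Hlx].
    exists (lx ++ l). intros u [u0 [[<-|Hin] Hw]]; apply in_or_app; eauto.
Qed.

End Aux.

Theorem mainTheorem10 (Act : Type) (tau : Act) (A B : automaton Act tau) :
  (deterministic Act tau B -> le_B Act tau A B -> le_R Act tau A B) /\
  ((forall s : state A, reachable Act tau A s) -> fin_invisible_nondet Act tau B ->
     le_B Act tau A B -> le_iB Act tau A B).
Proof.
  split.
  - intros [[s0 Hs0] Hdet] [b [S [lt [n Hsim]]]].
    pose proof (key _ _ _ _ _ _ _ _ Hsim) as K.
    assert (Uq : forall s beta u v, Reach Act tau A s beta -> b s u -> b s v -> u = v).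
    { intros s beta u v Hr Hu Hv.
      destruct (K s beta Hr u Hu) as [u0 [Hu0 Hw0]].
      destruct (K s beta Hr v Hv) as [v0 [Hv0 Hw1]].
      apply Hs0 in Hu0; apply Hs0 in Hv0; subst.
      eapply Hdet; eauto. eapply Reach_nontau; eauto. }
    pose proof Hsim as [[_ [Hirr _]] [Htot [H1 H2]]].
    set (ch := fun s => proj1_sig (constructive_indefinite_description _ (Htot s))).
    assert (Hch : forall s, b s (ch s)).
    { intros s. unfold ch. exact (proj2_sig (constructive_indefinite_description _ (Htot s))). }
    exists (fun s => match excluded_middle_informative (exists beta, Reach Act tau A s beta) with
                     | left _ => Some (ch s) | right _ => None end).
    split.
    + intros s Hs. destruct excluded_middle_informative as [_|Hn].
      2:{ exfalso; apply Hn; exists []; apply R0; auto. }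
      exists (ch s); split; auto.
      destruct (H1 s (ch s) Hs (Hch s)) as [?|[v [Hv [Hvu Hlt]]]]; auto.
      assert (v = ch s) by (eapply Uq; eauto; apply R0; auto). subst.
      exfalso; eapply Hirr; eauto.
    + intros s a t Hst u Hu.
      destruct excluded_middle_informative as [[beta Hr]|Hn]; [|discriminate].
      injection Hu as <-.
      destruct (Reach_step _ _ _ _ _ _ _ Hr Hst) as [beta' Hr'].
      destruct excluded_middle_informative as [_|Hn].
      2:{ exfalso; apply Hn; eauto. }
      exists (ch t); split; auto.
      destruct (H2 s a t (ch t) Hst (Hch t)) as [[Hb Ha]|[[w [Hw Hwv]]|[w [Hw [Hwv Hlt]]]]].
      * left; split; auto. exact (Uq s beta _ _ Hr (Hch s) Hb).
      * right. assert (w = ch s) by (exact (Uq s beta _ _ Hr Hw (Hch s))). subst; auto.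
      * assert (w = ch t) by (exact (Uq t beta' _ _ Hr' Hw (Hch t))). subst.
        exfalso; eapply Hirr; eauto.
  - intros Hreach [[L0 HL0] Hfin] [b [S [lt [n Hsim]]]].
    exists b, S, lt, n; split; auto.
    intros s. destruct (reachable_Reach _ _ _ _ (Hreach s)) as [beta Hr].
    destruct (fin_union _ _ B beta (fun s0 => Hfin s0 beta (Reach_nontau _ _ _ _ _ Hr)) L0) as [l Hl].
    exists l. intros u Hu. apply Hl.
    destruct (key _ _ _ _ _ _ _ _ Hsim s beta Hr u Hu) as [u0 [Hu0 Hw]]. eauto.
Qed.
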